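(* Consider the flat $G(3)$-contact supergeometry on $J^1=J^1(\mathbb{C}^{2|2},\mathbb{C}^{1|0})$ (defined in the context) and let $\mathcal{E}=\widehat{\mathcal V}\subset J^2(\mathbb{C}^{2|2},\mathbb{C}^{1|0})$ be the collection of affine tangent spaces along its field of $(1|2)$-twisted cubics $\mathcal V$. Then $\mathcal E$ is a sub-supermanifold of dimension $(6|6)$ and it is given by the $G(3)$-contact super-PDE system $$u_{xx}=\tfrac13u_{yy}^3+2u_{yy}u_{y\nu}u_{y\tau},\quad u_{xy}=\tfrac12u_{yy}^2+u_{y\nu}u_{y\tau},\quad u_{x\nu}=u_{yy}u_{y\nu},\quad u_{x\tau}=u_{yy}u_{y\tau},\quad u_{\nu\tau}=-u_{yy}.$$
   Context: $J^1=J^1(\mathbb{C}^{2|2},\mathbb{C}^{1|0})$ has coordinates $(x^0,x^1,x^2,x^3,u,u_0,\dots,u_3)=(x,y,\nu,\tau,u,u_x,u_y,u_\nu,u_\tau)$, with $x,y,u,u_x,u_y$ even and the others odd; it has contact form $\sigma=du-\sum_i(dx^i)u_i$ and contact distribution $\mathcal C=\ker\sigma$ with flat frame $D_i=\partial_{x^i}+u_i\partial_u$, $U^i=\partial_{u_i}$ ($i=0,\dots,3$). $J^2=J^2(\mathbb{C}^{2|2},\mathbb{C}^{1|0})$ is the bundle of Lagrangian subspaces of $(\mathcal C,[d\sigma|_{\mathcal C}])$ with fibre coordinates $u_{ij}=(-1)^{|i||j|}u_{ji}$ (parity $|i|$ of $x^i$), the point $(u_{ij})$ corresponding to the Lagrangian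 subspace spanned by $D_i+\sum_ju_{ij}U^j$. Points and subspaces are understood via the functor of points: for a finite-dimensional supercommutative algebra $\mathbb A$, take $\lambda\in\mathbb A_{\bar0}$, $\theta,\phi\in\mathbb A_{\bar1}$. The field of $(1|2)$-twisted cubics $\mathcal V\subset\mathbb P(\mathcal C)$ of the flat frame consists, at each point, of the rank $(1|0)$ free $\mathbb A$-submodules spanned by $V=D_0-\lambda D_1-\theta D_2-\phi D_3-(\tfrac{\lambda^3}{6}+\lambda\theta\phi)U^0-(\tfrac{\lambda^2}{2}+\theta\phi)U^1-\lambda\phi U^2+\lambda\theta U^3$, together with (Zariski closure) the point at infinity spanned by $U^0$. The affine tangent space of $\mathcal V$ at the super-point spanned by $V$ is the Lagrangian $\mathbb A$-module spanned by $V$ and its derivatives in $\lambda,\theta,\phi$; explicitly it is spanned by $B_0=D_0+(\tfrac{\lambda^3}{3}+2\lambda\theta\phi)U^0+(\tfrac{\lambda^2}{2}+\theta\phi)U^1+\lambda\phi U^2-\lambda\theta U^3$, $B_1=D_1+(\tfrac{\lambda^2}{2}+\theta\phi)U^0+\lambda U^1+\phi U^2-\theta U^3$, $B_2=D_2+\lambda\phi U^0+\phi U^1-\lambda U^3$, $B_3=D_3-\lambda\theta U^0-\theta U^1+\lambda U^2$. $\widehat{\mathcal V}\subset J^2$ is the collection of these affine tangent spaces as the super-point varies along $\mathcal V$ (at all points of $J^1$). *)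

(* Defs.v *)
(* Functor-of-points model of J^1, J^2 and E = \hat V
   for J^1(C^{2|2}, C^{1|0}). *)
From HB Require Import structures.
From mathcomp Require Import all_boot all_order all_algebra.
From mathcomp Require Import falgebra.
Set Implicit Arguments. Unset Strict Implicit. Unset Printing Implicit Defensive.
Import Order.TTheory GRing.Theory Num.Theory.
Local Open Scope ring_scope.

Section Super.
Variables (K : fieldType) (A : falgType K).

Definition superComm (A0 A1 : {vspace A}) : Prop :=
  [/\ (A0 + A1 = fullv)%VS, (A0 :&: A1 = 0)%VS & 1 \in A0] /\
  [/\ {in A0 &, forall a b, a * b \in A0},
      {in A0 & A1, forall a b, a * b \in A1},
      {in A1 & A0, forall a b, a * b \in A1} &
      {in A1 &, forall a b, a * b \in A0}] /\
  {in A0, forall a b, a * b = b * a} /\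
  {in A1 &, forall a b, a * b = - (b * a)}.

Variables (A0 A1 : {vspace A}).

(* parity of the coordinate x^i : x^0 = x, x^1 = y even; x^2 = nu, x^3 = tau odd *)
Definition par (i : 'I_4) : bool := (2 <= i)%N.

Definition homog (b : bool) (a : A) : bool := a \in (if b then A1 else A0).

Definition J1pt (X : 'I_4 -> A) (U : A) (P : 'I_4 -> A) : Prop :=
  [/\ forall i, homog (par i) (X i), homog false U & forall i, homog (par i) (P i)].

Definition J2pt (X : 'I_4 -> A) (U : A) (P : 'I_4 -> A) (u : 'I_4 -> 'I_4 -> A) : Prop :=
  J1pt X U P /\ forall i j, homog (par i (+) par j) (u i j) /\
     u i j = (if par i && par j then - u j i else u j i).

(* fibre coordinates u_ij of the Lagrangian subspace spanned by
   B_i = D_i + sum_j u_ij U^j (the affine tangent space at the super-point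
   of the twisted cubic with parameters lambda, theta, phi) *)
Definition uhat (l th ph : A) (i j : 'I_4) : A :=
  match nat_of_ord i, nat_of_ord j with
  | 0, 0 => (3%:R^-1 : K) *: l ^+ 3 + 2%:R * l * th * ph
  | 0, 1 | 1, 0 => (2%:R^-1 : K) *: l ^+ 2 + th * ph
  | 0, 2 | 2, 0 => l * ph
  | 0, 3 | 3, 0 => - (l * th)
  | 1, 1 => l
  | 1, 2 | 2, 1 => ph
  | 1, 3 | 3, 1 => - th
  | 2, 3 => - l
  | 3, 2 => l
  | _, _ => 0
  end.

(* A-points of E = \hat V (affine chart, i.e. away from the point at infinity
   of the cubic, whose tangent space is not in the u_ij chart) *)
Definition inVhat (X : 'I_4 -> A) (U : A) (P : 'I_4 -> A) (u : 'I_4 -> 'I_4 -> A) : Prop :=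
  J1pt X U P /\ exists l th ph, [/\ l \in A0, th \in A1, ph \in A1 &
                                   forall i j, u i j = uhat l th ph i j].

End Super.

Notation i0 := (@Ordinal 4 0 isT).
Notation i1 := (@Ordinal 4 1 isT).
Notation i2 := (@Ordinal 4 2 isT).
Notation i3 := (@Ordinal 4 3 isT).

(* The G(3)-contact super-PDE system (x = x^0, y = x^1, nu = x^2, tau = x^3) *)
Definition G3system (K : fieldType) (A : falgType K) (u : 'I_4 -> 'I_4 -> A) : Prop :=
  [/\ u i0 i0 = (3%:R^-1 : K) *: u i1 i1 ^+ 3 + 2%:R * u i1 i1 * u i1 i2 * u i1 i3,
      u i0 i1 = (2%:R^-1 : K) *: u i1 i1 ^+ 2 + u i1 i2 * u i1 i3,
      u i0 i2 = u i1 i1 * u i1 i2,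
      u i0 i3 = u i1 i1 * u i1 i3
    & u i2 i3 = - u i1 i1].

(* Main.v *)
Require Import Defs.
From HB Require Import structures.
From mathcomp Require Import all_boot all_order all_algebra falgebra.
Import GRing.Theory.
Local Open Scope ring_scope.

Lemma ord4P (P : 'I_4 -> Prop) : P i0 -> P i1 -> P i2 -> P i3 -> forall i, P i.
Proof.
move=> H0 H1 H2 H3 [[|[|[|[|i]]]] Hi] //.
- by rewrite (bool_irrelevance Hi isT).
- by rewrite (bool_irrelevance Hi isT).
- by rewrite (bool_irrelevance Hi isT).
- by rewrite (bool_irrelevance Hi isT).
Qed.

Lemma half0 (K : fieldType) (hK : [pchar K] =i pred0) (A : falgType K) (x : A) :
  x = - x -> x = 0.
Proof.
move=> h.
have h2 : (2%:R : K) != 0 by rewrite (pcharf0P _).1.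
have : (2%:R : K) *: x = 0 by rewrite scaler_nat mulr2n {1}h addNr.
by move=> /(congr1 (fun v => (2%:R : K)^-1 *: v)); rewrite scalerK // scaler0.
Qed.

Theorem theorem4p7 (K : fieldType) (hK : [pchar K] =i pred0)
  (A : falgType K) (A0 A1 : {vspace A}) (hA : superComm A0 A1) :
  (* E is contained in J^2 *)
  (forall X U P u, inVhat A0 A1 X U P u -> J2pt A0 A1 X U P u) /\
  (* E is cut out of J^2 by the G(3)-contact super-PDE system *)
  (forall X U P u, J2pt A0 A1 X U P u ->
     (inVhat A0 A1 X U P u <-> G3system u)) /\
  (* dimension (6|6): over each A-point of J^1 (dimension (5|4)), the A-points
     of E are freely and uniquely parametrized by (u_yy, u_ynu, u_ytau) in
     A0 x A1 x A1 *)
  (forall X U P, J1pt A0 A1 X U P ->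
     forall a b c, a \in A0 -> b \in A1 -> c \in A1 ->
       exists u, inVhat A0 A1 X U P u /\ (u i1 i1, u i1 i2, u i1 i3) = (a, b, c)
       /\ forall u', inVhat A0 A1 X U P u' -> (u' i1 i1, u' i1 i2, u' i1 i3) = (a, b, c) ->
                     forall i j, u' i j = u i j).
Proof.
case: hA => [[_ _ one0] [[M00 M01 M10 M11] [_ anti]]].
have two0 : (2%:R : A) \in A0 by rewrite -[2%:R]/(1 + 1 : A); apply: memvD.
split.
  move=> X U P u [hJ [l [th [ph [hl hth hph hu]]]]]; split=> //.
  have thph : th * ph \in A0 by apply: (M11).
  have lth : l * th \in A1 by apply: (M01).
  have lph : l * ph \in A1 by apply: (M01).
  apply: ord4P; apply: ord4P; rewrite !hu /homog /par /uhat /= ?memvN //;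
    split=> //; rewrite ?opprK ?oppr0 //.
  all: rewrite ?mem0v //.
  - have l3 : l ^+ 3 \in A0 by rewrite exprS expr2; apply: (M00) => //; apply: (M00).
    apply: memvD; first exact: memvZ.
    apply: (M11) => //; apply: (M01) => //; exact: (M00).
  1,2: have l2 : l ^+ 2 \in A0 by rewrite expr2; apply: (M00).
  1,2: by apply: memvD; first exact: memvZ.
split.
  move=> X U P u [hJ hs]; split.
    case=> _ [l [th [ph [hl hth hph hu]]]].
    have e : ph * - th = th * ph by rewrite mulrN anti // opprK.
    rewrite /G3system !hu /uhat /=; split.
    - by rewrite -[_ * ph * - th]mulrA e mulrA.
    - by rewrite e.
    1-3: by rewrite ?mulrN.
  case=> e00 e01 e02 e03 e23; split=> //.
  have h11 := (hs i1 i1).1; have h12 := (hs i1 i2).1; have h13 := (hs i1 i3).1.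
  rewrite /homog /par /= in h11 h12 h13.
  exists (u i1 i1), (- u i1 i3), (u i1 i2); split; rewrite ?memvN //.
  have e : - u i1 i3 * u i1 i2 = u i1 i2 * u i1 i3 by rewrite mulNr anti // opprK.
  apply: ord4P; apply: ord4P; rewrite /uhat /= ?opprK //.
  - by rewrite -[_ * - u i1 i3 * u i1 i2]mulrA e mulrA.
  - by rewrite e.
  - by rewrite mulrN opprK.
  - by rewrite (hs i1 i0).2 /= e.
  - by rewrite (hs i2 i0).2 /=.
  - by rewrite (hs i2 i1).2 /=.
  - by apply: (@half0 K hK A); rewrite {1}(hs i2 i2).2.
  - by rewrite (hs i3 i0).2 /= mulrN opprK.
  - by rewrite (hs i3 i1).2 /=.
  - by rewrite (hs i3 i2).2 /= e23 opprK.
  - by apply: (@half0 K hK A); rewrite {1}(hs i3 i3).2.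
move=> X U P hJ a b c ha hb hc.
exists (uhat a (- c) b); split.
  by split=> //; exists a, (- c), b; split; rewrite ?memvN.
split; first by rewrite /uhat /= opprK.
move=> u' [_ [l [th [ph [hl hth hph hu]]]]] [e1 e2 e3] i j.
have el : l = a by rewrite -e1 hu.
have eph : ph = b by rewrite -e2 hu.
have eth : th = - c by rewrite -e3 hu /= opprK.
by rewrite hu el eph eth.
Qed.
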